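(* Let $I$ be a finite index set of users. For each $i \in I$ let $p_i \in [0,1]$, $\Delta p_i \in \mathbb{R}$ with $p_i - \Delta p_i \in [0,1]$, and $a_i \in [0,1]$. Let $\mathrm{CPA} > 0$ and $\beta > 0$, and define $$J = \{ i \in I : \mathrm{CPA}\, p_i a_i > \beta \Delta p_i \}, \qquad K = \{ i \in I : \mathrm{CPA}\, p_i a_i < \beta \Delta p_i \}.$$ Assume it is not the case that $\mathrm{CPA}\, p_i a_i = \beta \Delta p_i$ for all $i \in I$. Suppose that $\sum_{j \in J} p_j a_j = \sum_{k \in K} p_k a_k$ and that this common value is positive. Define $$\mathscr{C}_1 = \frac{\sum_{j\in J} \beta \Delta p_j}{\sum_{j\in J} p_j a_j}, \qquad \mathscr{C}_2 = \frac{\sum_{k\in K} \mathrm{CPA}\, p_k a_k}{\sum_{k \in K} p_k a_k}.$$ Then $\mathscr{C}_1 < \mathscr{C}_2$.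
   Context: Interpretation (real-time bidding for online ads): each $i\in I$ indexes an ad request from a distinct user $u_i$; $p_i$ is the action rate if the advertiser's ad is shown, $p_i-\Delta p_i$ the background action rate if it is not shown, $\Delta p_i$ the AR lift, and $a_i$ the probability that an action from $u_i$ is attributed to the DSP that wins $u_i$. $\mathrm{CPA}$ is the advertiser's cost per action. In pure second-price auctions with no other candidates, $DSP_1$ bids $\mathrm{CPA}\, p_i a_i$ and $DSP_2$ bids $\beta\Delta p_i$; $DSP_1$ wins users in $J$ paying $\beta\Delta p_j$ each, $DSP_2$ wins users in $K$ paying $\mathrm{CPA}\,p_k a_k$ each. The expected attributed actions are $\sum_J p_j a_j$ and $\sum_K p_k a_k$ (assumed equal). $\mathscr{C}_1,\mathscr{C}_2$ are the costs per attributed action of $DSP_1$ and $DSP_2$. The excluded case is $a_i = \frac{\beta}{\mathrm{CPA}}\cdot\frac{\Delta p_i}{p_i}$ for all $i$, i.e. both DSPs always bid the same price. *)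

(* Defs.v *)
From mathcomp Require Import all_boot all_order all_algebra.
Set Implicit Arguments. Unset Strict Implicit. Unset Printing Implicit Defensive.
Import Order.TTheory GRing.Theory Num.Theory.
Local Open Scope ring_scope.

Definition setJ (R : realFieldType) (I : finType) (CPA beta : R) (p dp a : I -> R) : {set I} :=
  [set i | beta * dp i < CPA * p i * a i].
Definition setK (R : realFieldType) (I : finType) (CPA beta : R) (p dp a : I -> R) : {set I} :=
  [set i | CPA * p i * a i < beta * dp i].

Definition cost1 (R : realFieldType) (I : finType) (CPA beta : R) (p dp a : I -> R) : R :=
  (\sum_(j in setJ CPA beta p dp a) beta * dp j) / (\sum_(j in setJ CPA beta p dp a) p j * a j).
Definition cost2 (R : realFieldType) (I : finType) (CPA beta : R) (p dp a : I -> R) : R :=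
  (\sum_(k in setK CPA beta p dp a) CPA * p k * a k) / (\sum_(k in setK CPA beta p dp a) p k * a k).

(* Main.v *)
Require Import Defs.
From mathcomp Require Import all_boot all_order all_algebra.
Import Order.TTheory GRing.Theory Num.Theory.
Local Open Scope ring_scope.

Lemma memJ (R : realFieldType) (I : finType) (p dp a : I -> R) (CPA beta : R) i :
  (i \in setJ CPA beta p dp a) = (beta * dp i < CPA * p i * a i).
Proof. by rewrite inE. Qed.

Theorem theorem4 (R : realFieldType) (I : finType) (p dp a : I -> R) (CPA beta : R)
  (hp : forall i, 0 <= p i <= 1)
  (hdp : forall i, 0 <= p i - dp i <= 1)
  (ha : forall i, 0 <= a i <= 1)
  (hCPA : 0 < CPA) (hbeta : 0 < beta)
  (hnot : ~ (forall i, CPA * p i * a i = beta * dp i))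
  (heq : \sum_(j in setJ CPA beta p dp a) p j * a j
         = \sum_(k in setK CPA beta p dp a) p k * a k)
  (hpos : 0 < \sum_(j in setJ CPA beta p dp a) p j * a j) :
  cost1 CPA beta p dp a < cost2 CPA beta p dp a.
Proof.
rewrite /cost1 /cost2.
have hK : \sum_(k in setK CPA beta p dp a) CPA * p k * a k = CPA * \sum_(k in setK CPA beta p dp a) p k * a k.
  by rewrite mulr_sumr; apply: eq_bigr => i _; rewrite mulrA.
rewrite hK -heq mulfK; last by rewrite gt_eqF.
rewrite ltr_pdivrMr //.
have hJ : \sum_(j in setJ CPA beta p dp a) beta * dp j < \sum_(j in setJ CPA beta p dp a) CPA * (p j * a j).
  have [j jJ] : exists j, j \in setJ CPA beta p dp a.
    case: (set_0Vmem (setJ CPA beta p dp a)) => [J0|[j jJ]]; last by exists j.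
    by move: hpos; rewrite big1 ?ltxx // => i; rewrite J0 inE.
  rewrite (bigD1 j jJ) [X in _ < X](bigD1 j jJ) /=.
  apply: ltr_leD.
    by move: jJ; rewrite mulrA -memJ.
  apply: ler_sum => i /andP[iJ _]; apply: ltW.
  by move: iJ; rewrite mulrA -memJ.
have E : \sum_(j in setJ CPA beta p dp a) CPA * (p j * a j)
   = (\sum_(j in setJ CPA beta p dp a) p j * a j) * CPA.
  by rewrite mulr_suml; apply: eq_bigr => i _; rewrite mulrC.
by move: hJ; rewrite E mulrC.
Qed.
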